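(* For every choice of parameters $\lambda>0$, $\eta\in(0,1)$, $g_l^*>0$, integers $t\ge1$ and $\mathit{Depth}_{\max}\ge 1$, and privacy budget $\varepsilon_t>0$, the algorithm TrainSingleTree described below is $\varepsilon_t$-differentially private, i.e. for all neighboring datasets $D,D'$ and every measurable set $O$ of outputs, $\Pr[\mathcal A(D)\in O]\le e^{\varepsilon_t}\Pr[\mathcal A(D')\in O]$.
   Context: A dataset is a finite collection of records $i$, each consisting of a feature vector $\mathbf x_i\in\mathbb R^d$, a label $y_i\in[-1,1]$ and a gradient $g_i\in\mathbb R$ determined by the record (e.g. $g_i=\partial l(y_i,y)/\partial y$ evaluated at the prediction of a fixed, data-independent current model). Two datasets are neighboring if one is obtained from the other by adding or removing one record. Splits of a node are chosen from a fixed finite set of candidate splits (feature index, threshold), each partitioning the node's records into a left set $I_L$ and right set $I_R$. Let $G(I_L,I_R)=\frac{(\sum_{i\in I_L}g_i)^2}{|I_L|+\lambda}+\frac{(\sum_{i\in I_R}g_i)^2}{|I_R|+\lambda}$, $V(I)=-\frac{\sum_{i\in I}g_i}{|I|+\lambda}$, $\Delta G=3{g_l^*}^2$, $\Delta V=\min\left(\frac{g_l^*}{1+\lambda},2g_l^*(1-\eta)^{t-1}\right)$. Algorithm TrainSingleTree on dataset $I$: (1) set $\varepsilon_{leaf}=\varepsilon_t/2$ and $\varepsilon_{nleaf}=\varepsilon_t/(2\mathit{Depth}_{\max})$; (2) discard all records with $|g_i|>g_l^*$; (3) starting from a root node containing all remaining records, for $depth=1,\dots,\mathit{Depth}_{\max}$,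 for each node at the current depth: for each candidate split $j$ compute $G_j=G(I_L,I_R)$ on the node's records, choose split $s$ with probability $P_s/\sum_j P_j$ where $P_j=\exp\left(\frac{\varepsilon_{nleaf}G_j}{2\Delta G}\right)$, and split the node accordingly; (4) for each resulting leaf with record set $I_\ell$, compute $V=V(I_\ell)$, clip it to $V'=V\cdot\min(1,g_l^*(1-\eta)^{t-1}/|V|)$ (with $V'=0$ if $V=0$), and release $V'+\mathrm{Lap}(0,\Delta V/\varepsilon_{leaf})$ using independent Laplace noise of mean $0$ and scale $\Delta V/\varepsilon_{leaf}$. The output is the tree structure (all chosen splits) together with the noisy leaf values. *)

(* Defs.v *)
From HB Require Import structures.
From mathcomp Require Import all_boot all_order all_algebra.
From mathcomp Require Import all_classical all_reals all_analysis.

Set Implicit Arguments.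
Unset Strict Implicit.
Unset Printing Implicit Defensive.

Import Order.TTheory GRing.Theory Num.Theory.
Local Open Scope ring_scope.

Section TrainSingleTree.
Variable R : realType.

(* A record is a pair (x, y) with feature vector x in R^d and label y.
   The gradient of a record is g x y, for a fixed (data-independent)
   function g : R^d -> R -> R. *)
Definition record (d : nat) := ('rV[R]_d * R)%type.

(* A dataset is a finite collection (multiset) of records, represented by
   a sequence taken up to permutation. *)
Definition neighboring (d : nat) (D D' : seq (record d)) : Prop :=
  (exists r, perm_eq D' (r :: D)) \/ (exists r, perm_eq D (r :: D')).

Definition goes_left (d : nat) (sp : 'I_d * R) (x : 'rV[R]_d) : bool :=
  x ord0 sp.1 < sp.2.

(* Tree structure of a full binary tree of depth Dmax: internal nodes are
   numbered in heap order 0 .. 2^Dmax - 2 (root 0, children of p are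
   2p+1 (left) and 2p+2 (right)); leaves are the heap nodes
   2^Dmax - 1 + j, j < 2^Dmax. *)
Definition tree_struct (Dmax m : nat) := {ffun 'I_(2 ^ Dmax).-1 -> 'I_m}.

Section Tree.
Variables (d m Dmax : nat) (spl : 'I_m -> 'I_d * R) (s : tree_struct Dmax m).

(* split chosen at internal heap node p (None if p is not internal,
   which never happens in uses below) *)
Definition split_at (p : nat) : option ('I_d * R) :=
  if insub p is Some q then Some (spl (s q)) else None.

Definition goes_left_at (p : nat) (x : 'rV[R]_d) : bool :=
  if split_at p is Some sp then goes_left sp x else true.

(* does a record with features x reach heap node i ?  (fuel-based
   recursion; fuel i suffices since the parent (i-1)/2 of i > 0 is < i) *)
Fixpoint reach_fuel (fuel : nat) (x : 'rV[R]_d) (i : nat) : bool :=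
  match fuel with
  | 0 => i == 0
  | f.+1 => if i == 0 then true
            else let p := (i.-1)./2 in
                 reach_fuel f x p && (goes_left_at p x == odd i)
  end.

Definition reach (x : 'rV[R]_d) (i : nat) : bool := reach_fuel i x i.
End Tree.

Section Algorithm.
Variables (d m Dmax t : nat) (spl : 'I_m -> 'I_d * R) (g : 'rV[R]_d -> R -> R).
Variables (lam eta gl eps : R).

Definition grad (r : record d) : R := g r.1 r.2.

Definition clipped_data (D : seq (record d)) : seq (record d) :=
  [seq r <- D | `|grad r| <= gl].

Definition sum_grad (I : seq (record d)) : R := \sum_(r <- I) grad r.

Definition gain (IL IR : seq (record d)) : R :=
  (sum_grad IL) ^+ 2 / ((size IL)%:R + lam)
  + (sum_grad IR) ^+ 2 / ((size IR)%:R + lam).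

Definition leaf_value (I : seq (record d)) : R :=
  - (sum_grad I) / ((size I)%:R + lam).

Definition DeltaG : R := 3 * gl ^+ 2.
Definition cap : R := gl * (1 - eta) ^+ t.-1.
Definition DeltaV : R := Num.min (gl / (1 + lam)) (2 * gl * (1 - eta) ^+ t.-1).
Definition eps_leaf : R := eps / 2.
Definition eps_nleaf : R := eps / (2 * Dmax%:R).

Definition split_gain (I : seq (record d)) (j : 'I_m) : R :=
  gain [seq r <- I | goes_left (spl j) r.1]
       [seq r <- I | ~~ goes_left (spl j) r.1].

Definition expw (I : seq (record d)) (j : 'I_m) : R :=
  expR (eps_nleaf * split_gain I j / (2 * DeltaG)).

Definition choose_prob (I : seq (record d)) (j : 'I_m) : R :=
  expw I j / \sum_(k < m) expw I k.

Definition node_records (D : seq (record d)) (s : tree_struct Dmax m) (i : nat)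
  : seq (record d) :=
  [seq r <- clipped_data D | reach spl s r.1 i].

Definition struct_prob (D : seq (record d)) (s : tree_struct Dmax m) : R :=
  \prod_(i : 'I_(2 ^ Dmax).-1) choose_prob (node_records D s i) (s i).

Definition clip (V : R) : R :=
  if V == 0 then 0 else V * Num.min 1 (cap / `|V|).

Definition leaf_means (D : seq (record d)) (s : tree_struct Dmax m)
  : (2 ^ Dmax).-tuple R :=
  [tuple clip (leaf_value (node_records D s ((2 ^ Dmax).-1 + j))) | j < 2 ^ Dmax].

Definition laplace_pdf (mu b x : R) : R := (2 * b)^-1 * expR (- `|x - mu| / b).

(* law of a tuple of independent Laplace variables with means mus and
   common scale b, evaluated on a set A of tuples (iterated integral) *)
Fixpoint laplace_tuple (n : nat) : n.-tuple R -> set (n.-tuple R) -> \bar R :=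
  match n with
  | 0 => fun _ A => (\1_A [tuple] : R)%:E
  | n'.+1 => fun mus A =>
      (\int[lebesgue_measure]_x
         ((laplace_pdf (thead mus) (DeltaV / eps_leaf) x)%:E *
          laplace_tuple (behead_tuple mus) [set v | A (cons_tuple (x : R) v)]))%E
  end.

(* Pr[TrainSingleTree(D) \in O], the output being (tree structure, noisy
   leaf values) *)
Definition output_prob (D : seq (record d))
  (O : set (tree_struct Dmax m * (2 ^ Dmax).-tuple R)) : \bar R :=
  (\sum_(s : tree_struct Dmax m)
     (struct_prob D s)%:E * laplace_tuple (leaf_means D s) [set v | O (s, v)])%E.

End Algorithm.

(* measurable output sets: the structure component is finite and carries
   the discrete sigma-algebra, so a set of outputs is measurable (for the
   product sigma-algebra) iff each of its sections is measurable in R^(2^Dmax) *)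
Definition output_measurable (Dmax m : nat)
  (O : set (tree_struct Dmax m * (2 ^ Dmax).-tuple R)) : Prop :=
  forall s, measurable [set v | O (s, v)].

End TrainSingleTree.

(* Main.v *)
Require Import Defs.
From HB Require Import structures.
From mathcomp Require Import all_boot all_order all_algebra.
From mathcomp Require Import all_classical all_reals all_analysis.
From mathcomp Require Import ring lra zify.
Import Order.TTheory GRing.Theory Num.Theory.
Local Open Scope ring_scope.
Section Integ.
Variable R : realType.
Local Open Scope ereal_scope.
Import HBNNSimple.

Lemma my_le_integral (f h : R -> \bar R) :
  (forall x, 0 <= f x) -> (forall x, f x <= h x) ->
  \int[lebesgue_measure]_x f x <= \int[lebesgue_measure]_x h x.
Proof.
move=> f0 fh.
have h0 x : 0 <= h x by apply: le_trans (fh x).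
rewrite !ge0_integralTE//; apply: ereal_sup_le => _ [u /= uf <-].
exists u => //= x; exact: le_trans (uf x) (fh x).
Qed.

Lemma my_integralZ (k : R) (f : R -> \bar R) : (0 < k)%R ->
  (forall x, 0 <= f x) ->
  \int[lebesgue_measure]_x (k%:E * f x) <= k%:E * \int[lebesgue_measure]_x f x.
Proof.
move=> k0 f0.
have kf0 x : 0 <= k%:E * f x by rewrite mule_ge0// lee_fin ltW.
rewrite !ge0_integralTE//; apply: ge_ereal_sup => _ [u /= uf <-].
have ki0 : (0 <= k^-1)%R by rewrite invr_ge0 ltW.
pose v := scale_nnsfun u ki0.
have -> : sintegral lebesgue_measure u = k%:E * sintegral lebesgue_measure v.
  rewrite /v /scale_nnsfun /=.
  have := sintegralrM lebesgue_measure k^-1 u => /= ->.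
  by rewrite muleA -EFinM mulfV ?gt_eqF// mul1e.
rewrite lee_pmul2l ?lte_fin//; apply: ereal_sup_ubound => /=.
exists v => // x /=.
rewrite -(@lee_pmul2l _ k%:E) ?lte_fin// -EFinM mulrA mulfV ?gt_eqF// mul1r.
exact: uf.
Qed.
End Integ.
Section Lap.
Variable R : realType.

Lemma lap_pdf_ge0 (mu b x : R) : 0 < b -> 0 <= laplace_pdf mu b x.
Proof. by move=> b0; rewrite /laplace_pdf mulr_ge0 ?invr_ge0 ?mulr_ge0 ?ltW ?expR_gt0. Qed.

Lemma lap_pdf_le (mu mu' b x : R) : 0 < b ->
  laplace_pdf mu b x <= expR (`|mu - mu'| / b) * laplace_pdf mu' b x.
Proof.
move=> b0; rewrite /laplace_pdf mulrCA ler_pM2l ?invr_gt0 ?mulr_gt0//.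
rewrite -expRD ler_expR.
have h := ler_distD mu x mu'.
rewrite -mulrDl ler_pM2r ?invr_gt0//.
rewrite (distrC x mu') (distrC mu mu') (distrC x mu) in h *. lra.
Qed.

Variables (d m Dmax t : nat) (spl : 'I_m -> 'I_d * R) (g : 'rV[R]_d -> R -> R).
Variables (lam eta gl eps : R).
Local Notation L := (@laplace_tuple R t lam eta gl eps).
Local Notation b := (DeltaV t lam eta gl / eps_leaf eps).

Lemma lap_ge0 n (mus : n.-tuple R) A : 0 < b -> (0 <= @L n mus A)%E.
Proof.
move=> b0; elim: n mus A => [|n IH] mus A /=.
  by rewrite lee_fin indicE; case: (_ \in _).
apply: integral_ge0 => x _; rewrite mule_ge0// lee_fin lap_pdf_ge0//.
Qed.

Lemma lap_le n (mus mus' : n.-tuple R) A c : 0 < b ->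
  \sum_(i < n) `|tnth mus i - tnth mus' i| <= c ->
  (@L n mus A <= (expR (c / b))%:E * @L n mus' A)%E.
Proof.
move=> b0; elim: n mus mus' A c => [|n IH] mus mus' A c /=.
  rewrite big_ord0 => c0.
  rewrite -[X in (X <= _)%E]mul1e; apply: lee_pmul => //.
  by rewrite lee_fin -expR0 ler_expR divr_ge0 // ltW.
move=> hc; rewrite big_ord_recl in hc.
set a := `|tnth mus ord0 - tnth mus' ord0| in hc.
have htail : \sum_(i < n) `|tnth (behead_tuple mus) i - tnth (behead_tuple mus') i| <= c - a.
  rewrite lerBrDl; apply: le_trans hc; rewrite lerD2l le_eqVlt; apply/orP; left; apply/eqP.
  by apply: eq_bigr => i _; rewrite !(tnth_nth 0) /= !nth_behead.
have Ec : expR (c / b) = expR (a / b) * expR ((c - a) / b).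
  by rewrite -expRD -mulrDl addrC subrK.
apply: le_trans (@my_le_integral R _ (fun x => (expR (c / b))%:E *
   ((laplace_pdf (thead mus') b x)%:E *
      L (behead_tuple mus') [set v | A (cons_tuple x v)]))%E _ _) _.
- by move=> x; rewrite mule_ge0 ?lee_fin ?lap_pdf_ge0 ?lap_ge0.
- move=> x; rewrite Ec.
  have h1 : ((laplace_pdf (thead mus) b x)%:E <= (expR (a / b) * laplace_pdf (thead mus') b x)%:E)%E.
    by rewrite lee_fin; apply: lap_pdf_le.
  have h2 := IH (behead_tuple mus) (behead_tuple mus') [set v : n.-tuple R | A (cons_tuple x v)]%classic _ htail.
  apply: le_trans (lee_pmul _ _ h1 h2) _.
  + by rewrite lee_fin lap_pdf_ge0.
  + by rewrite lap_ge0.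
  + set p := laplace_pdf _ _ x; set q := L _ _.
    rewrite !EFinM -!muleA le_eqVlt; apply/orP; left; apply/eqP.
    congr (_ * _)%E; rewrite [in RHS]muleCA; congr (_ * _)%E; by rewrite [in RHS]muleCA.
- have H0 : forall x, (0 <= (laplace_pdf (thead mus') b x)%:E *
      L (behead_tuple mus') [set v | A (cons_tuple x v)]%classic)%E.
    by move=> x; rewrite mule_ge0 ?lee_fin ?lap_pdf_ge0 ?lap_ge0.
  have HZ := @my_integralZ R (expR (c / b)) _ (expR_gt0 _) H0.
  exact: HZ.
Qed.
End Lap.
Section Reach.
Variables (R : realType) (d m Dmax : nat) (spl : 'I_m -> 'I_d * R) (s : tree_struct Dmax m).
Variable x : 'rV[R]_d.
Local Notation rf f i := (@reach_fuel R d m Dmax spl s f x i).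
Local Notation gl p := (@goes_left_at R d m Dmax spl s p x).

Fixpoint node_at (k : nat) : nat :=
  match k with 0 => 0%N | k'.+1 => let p := node_at k' in if gl p then p.*2.+1 else p.*2.+2 end.

Lemma rf_fuel f1 f2 i : (i <= f1)%N -> (i <= f2)%N -> rf f1 i = rf f2 i.
Proof.
elim: f1 f2 i => [|f1 IH] f2 i.
  rewrite leqn0 => /eqP -> _; case: f2 => //.
case: f2 => [|f2].
  rewrite leqn0 => _ /eqP -> //.
move=> h1 h2 /=; case: (i == 0%N) => //; congr (_ && _); apply: IH.
- by case: i h1 h2 => //= i h1 h2; rewrite leq_half_double; lia.
- by case: i h1 h2 => //= i h1 h2; rewrite leq_half_double; lia.
Qed.

Lemma reach_node i : @reach R d m Dmax spl s x i -> exists k, i = node_at k.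
Proof.
elim/ltn_ind: i => i IH; rewrite /reach.
case: i IH => [|i] IH; first by exists 0%N.
rewrite /= => /andP[hp hodd].
have hpi : ((i./2) < i.+1)%N by rewrite ltnS leq_half_double; lia.
have hp' : @reach R d m Dmax spl s x i./2.
  by rewrite /reach (rf_fuel _ i) // leq_half_double; lia.
have [k hk] := IH _ hpi hp'.
exists k.+1 => /=; rewrite -hk.
move/eqP: hodd => ->.
have := odd_double_half i.
case: (odd i) => /= h; lia.
Qed.

Lemma node_at_bounds k : (2 ^ k <= (node_at k).+1 < 2 ^ k.+1)%N.
Proof.
elim: k => [|k IH] //=.
rewrite !expnS in IH *; case: (gl _); lia.
Qed.

Lemma depth_unique k k' v : (2 ^ k <= v.+1 < 2 ^ k.+1)%N -> (2 ^ k' <= v.+1 < 2 ^ k'.+1)%N -> k = k'.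
Proof.
move=> /andP[h1 h2] /andP[h3 h4].
have a : (k < k'.+1)%N by rewrite -(ltn_exp2l _ _ (isT : 1 < 2)%N); apply: leq_ltn_trans h1 h4.
have b : (k' < k.+1)%N by rewrite -(ltn_exp2l _ _ (isT : 1 < 2)%N); apply: leq_ltn_trans h3 h2.
lia.
Qed.

Lemma card_internal : (0 < Dmax)%N ->
  (#|[pred i : 'I_(2 ^ Dmax).-1 | @reach R d m Dmax spl s x i]| <= Dmax)%N.
Proof.
move=> D0.
have N0 : (0 < (2 ^ Dmax).-1)%N.
  have : (2 ^ 1 <= 2 ^ Dmax)%N by rewrite leq_exp2l.
  rewrite expn1; lia.
pose i0 := Ordinal N0.
pose gm (k : 'I_Dmax) : 'I_(2 ^ Dmax).-1 := insubd i0 (node_at k).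
apply: leq_trans (_ : #|[set gm k | k in 'I_Dmax]| <= Dmax)%N; last first.
  by apply: leq_trans (leq_imset_card _ _) _; rewrite card_ord.
apply: subset_leq_card; apply/fintype.subsetP => i; rewrite inE => /reach_node [k hk].
have hb := node_at_bounds k.
have hkD : (k < Dmax)%N.
  rewrite -(ltn_exp2l _ _ (isT : 1 < 2)%N).
  move/andP: hb => [hb _]; apply: leq_ltn_trans hb _; rewrite -hk.
  have := ltn_ord i; lia.
apply/imsetP; exists (Ordinal hkD) => //; apply: val_inj.
by rewrite /gm val_insubd /= -hk ltn_ord.
Qed.

Lemma card_leaf :
  (#|[pred j : 'I_(2 ^ Dmax) | @reach R d m Dmax spl s x ((2 ^ Dmax).-1 + j)]| <= 1)%N.
Proof.
have P0 : (0 < 2 ^ Dmax)%N by rewrite expn_gt0.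
have key : forall j : 'I_(2 ^ Dmax), @reach R d m Dmax spl s x ((2 ^ Dmax).-1 + j) ->
   nat_of_ord j = (node_at Dmax - (2 ^ Dmax).-1)%N.
  move=> j /reach_node [k hk].
  have hb := node_at_bounds k.
  have hb2 : (2 ^ Dmax <= ((2 ^ Dmax).-1 + j).+1 < 2 ^ Dmax.+1)%N.
    have := ltn_ord j; rewrite expnS; lia.
  rewrite hk in hb2; have ek := depth_unique _ _ _ hb hb2.
  subst k; rewrite -hk; lia.
apply/card_le1P => j1 hj1 j2; rewrite !inE in hj1 *.
apply/idP/idP => [hj2|/eqP ->//].
by apply/eqP/val_inj; rewrite /= (key _ hj1) (key _ hj2).
Qed.
End Reach.
Section Num.
Variable R : realType.

Lemma gain_term_sens (a s gg gl : R) : 0 < a -> 0 <= gl -> `|s| <= a * gl -> `|gg| <= gl ->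
  `|(s + gg) ^+ 2 / (a + 1) - s ^+ 2 / a| <= 3 * gl ^+ 2.
Proof.
move=> a0 gl0 hs hg.
have a1 : 0 < a + 1 by lra.
have -> : (s + gg) ^+ 2 / (a + 1) - s ^+ 2 / a =
          ((s + gg) ^+ 2 * a - s ^+ 2 * (a + 1)) / (a * (a + 1)).
  by field; apply/andP; split; rewrite gt_eqF.
have aa : 0 < a * (a + 1) by rewrite mulr_gt0.
rewrite normrM normfV (gtr0_norm aa) ler_pdivrMr //.
have hsg : `|s * gg| <= a * gl * gl by rewrite normrM ler_pM.
move: hsg; rewrite ler_norml => /andP[hl hr].
have hsg1 : s * gg * a <= a * gl * gl * a by rewrite ler_pM2r.
have hsg2 : - (a * gl * gl) * a <= s * gg * a by rewrite ler_pM2r.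
have hs2 : s ^+ 2 <= (a * gl) ^+ 2.
  by move: hs; rewrite ler_norml => /andP[h1 h2]; nra.
have hg2 : gg ^+ 2 <= gl ^+ 2.
  by move: hg; rewrite ler_norml => /andP[h1 h2]; nra.
have hg2a : gg ^+ 2 * a <= gl ^+ 2 * a by rewrite ler_pM2r.
have hs0 : 0 <= s ^+ 2 by rewrite sqr_ge0.
have hg0 : 0 <= gg ^+ 2 * a by rewrite mulr_ge0 ?sqr_ge0 ?ltW.
rewrite ler_norml; apply/andP; split; nra.
Qed.

Lemma leaf_term_sens (n lam s gg gl : R) : 0 <= n -> n <= n * n -> 0 < lam -> 0 <= gl ->
  `|s| <= n * gl -> `|gg| <= gl ->
  `|- (gg + s) / (n + 1 + lam) - - s / (n + lam)| <= gl / (1 + lam).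
Proof.
move=> n0 nn lam0 gl0 hs hg.
set a := n + lam.
have a0 : 0 < a by rewrite /a; lra.
have -> : n + 1 + lam = a + 1 by rewrite /a; ring.
have -> : - (gg + s) / (a + 1) - - s / a = (s - gg * a) / (a * (a + 1)).
  by field; apply/andP; split; rewrite gt_eqF //; lra.
have aa : 0 < a * (a + 1) by rewrite mulr_gt0 //; lra.
rewrite normrM normfV (gtr0_norm aa) ler_pdivrMr //.
have h1 : `|s - gg * a| <= gl * (n + a).
  apply: le_trans (ler_normB _ _) _.
  rewrite normrM (gtr0_norm a0).
  have : `|gg| * a <= gl * a by rewrite ler_pM2r.
  lra.
apply: le_trans h1 _.
rewrite mulrAC ler_pdivlMr; last lra.
rewrite /a; nra.
Qed.

Definition clampv (c V : R) := if V < - c then - c else if c < V then c else V.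

Lemma clamp_lip c a b : 0 <= c -> `|clampv c a - clampv c b| <= `|a - b|.
Proof.
move=> c0.
have h1 : a - b <= `|a - b| := ler_norm _.
have h2 : b - a <= `|a - b| by rewrite distrC ler_norm.
move: h1 h2; set N := `|a - b| => h1 h2; rewrite /clampv.
case: (ltrP a (-c)) => ?; case: (ltrP c a) => ?; case: (ltrP b (-c)) => ?;
  case: (ltrP c b) => ?; rewrite ler_norml; apply/andP; split; lra.
Qed.

Lemma clamp_bound c a : 0 <= c -> `|clampv c a| <= c.
Proof.
move=> c0; rewrite /clampv ler_norml.
case: (ltrP a (-c)) => ?; case: (ltrP c a) => ?; apply/andP; split; lra.
Qed.

Lemma clipE (t : nat) (eta gl V : R) : 0 <= cap t eta gl ->
  clip t eta gl V = clampv (cap t eta gl) V.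
Proof.
rewrite /clip /clampv; set c := cap t eta gl => c0.
have [->|V0] := eqVneq V 0.
  by case: (ltrP 0 (-c)) => ?; [lra|]; case: (ltrP c 0) => ? //; lra.
have nV : 0 < `|V| by rewrite normr_gt0.
rewrite minEle.
case: (ltrP V (-c)) => h1.
  have hV : `|V| = - V by rewrite ltr0_norm //; lra.
  have : ~~ (1 <= c / `|V|) by rewrite -ltNge ltr_pdivrMr // mul1r hV; lra.
  move/negbTE => ->; rewrite hV; field.
  by rewrite ?oppr_eq0.
case: (ltrP c V) => h2.
  have hV : `|V| = V by rewrite gtr0_norm //; lra.
  have : ~~ (1 <= c / `|V|) by rewrite -ltNge ltr_pdivrMr // mul1r hV; lra.
  move/negbTE => ->; rewrite hV; field.
  by rewrite ?oppr_eq0.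
have : 1 <= c / `|V|.
  rewrite ler_pdivlMr // mul1r.
  by rewrite ler_norml; apply/andP; split.
by move=> ->; rewrite mulr1.
Qed.
End Num.
Section Seqs.
Variables (R : realType) (d m : nat) (spl : 'I_m -> 'I_d * R) (g : 'rV[R]_d -> R -> R).
Variables (lam gl : R).
Hypotheses (lam0 : 0 < lam) (gl0 : 0 < gl).
Local Notation clipped r := (`|grad g r| <= gl).
Local Notation allc I := (forall r, r \in I -> `|grad g r| <= gl).

Lemma sum_bound (I : seq (record R d)) : allc I -> `|sum_grad g I| <= (size I)%:R * gl.
Proof.
elim: I => [|r I IH] h; first by rewrite /sum_grad big_nil normr0 mul0r.
rewrite /sum_grad big_cons /= -natr1 mulrDl mul1r addrC.
apply: le_trans (ler_normD _ _) _; apply: lerD.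
- by apply: IH => x hx; apply: h; rewrite inE hx orbT.
- by apply: h; rewrite inE eqxx.
Qed.

Lemma allc_filter (P : pred (record R d)) I : allc I -> allc [seq x <- I | P x].
Proof. by move=> h r; rewrite mem_filter => /andP[_ /h]. Qed.

Lemma sum_grad_perm I J : perm_eq I J -> sum_grad g I = sum_grad g J.
Proof. by move=> p; rewrite /sum_grad (perm_big _ p). Qed.

Lemma split_gain_perm I J j : perm_eq I J -> split_gain spl g lam I j = split_gain spl g lam J j.
Proof.
move=> p; rewrite /split_gain /gain.
have p1 := perm_filter (fun r => goes_left (spl j) r.1) p.
have p2 := perm_filter (fun r => ~~ goes_left (spl j) r.1) p.
by rewrite (sum_grad_perm _ _ p1) (sum_grad_perm _ _ p2) (perm_size p1) (perm_size p2).
Qed.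

Lemma leaf_value_perm I J : perm_eq I J -> leaf_value g lam I = leaf_value g lam J.
Proof. by move=> p; rewrite /leaf_value (sum_grad_perm _ _ p) (perm_size p). Qed.

Lemma gain_sens I r j : allc I -> clipped r ->
  `|split_gain spl g lam (r :: I) j - split_gain spl g lam I j| <= DeltaG gl.
Proof.
move=> hI hr; rewrite /split_gain /gain /DeltaG /=.
set IL := [seq x <- I | goes_left (spl j) x.1].
set IR := [seq x <- I | ~~ goes_left (spl j) x.1].
have hL : allc IL by apply: (allc_filter _ _ hI).
have hR : allc IR by apply: (allc_filter _ _ hI).
have sb : forall J, allc J -> `|sum_grad g J| <= ((size J)%:R + lam) * gl.
  move=> J hJ; apply: le_trans (sum_bound _ hJ) _; by rewrite ler_pM2r // lerDl ltW.
have sz : forall J : seq (record R d), 0 < (size J)%:R + lam.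
  by move=> J; rewrite ltr_wpDl.
have e1 : forall X X' T : R, X' + T - (X + T) = X' - X by move=> *; ring.
have e2 : forall X X' T : R, T + X' - (T + X) = X' - X by move=> *; ring.
have sc : forall J, sum_grad g (r :: J) = sum_grad g J + grad g r.
  by move=> J; rewrite /sum_grad big_cons addrC.
case: (goes_left _ _) => /=.
- rewrite opprD addrACA subrr addr0 sc -natr1 (addrAC _ 1 lam).
  by apply: gain_term_sens; [apply: sz | exact: ltW | apply: sb | exact: hr].
- rewrite opprD addrACA subrr add0r sc -natr1 (addrAC _ 1 lam).
  by apply: gain_term_sens; [apply: sz | exact: ltW | apply: sb | exact: hr].
Qed.

Lemma leaf_sens I r : allc I -> clipped r ->
  `|leaf_value g lam (r :: I) - leaf_value g lam I| <= gl / (1 + lam).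
Proof.
move=> hI hr; rewrite /leaf_value /sum_grad big_cons /= -/(sum_grad g I) -natr1.
apply: leaf_term_sens.
- by apply: ler0n.
- case: (size I) => [|k]; first by rewrite mul0r.
  by rewrite -natrM ler_nat; apply: leq_pmulr.
- exact: lam0.
- exact: ltW.
- exact: sum_bound.
- exact: hr.
Qed.
End Seqs.
Section Main.
Variables (R : realType) (d m Dmax t : nat) (spl : 'I_m -> 'I_d * R) (g : 'rV[R]_d -> R -> R).
Variables (lam eta gl eps : R).
Hypotheses (lam0 : 0 < lam) (eta01 : 0 < eta < 1) (gl0 : 0 < gl) (D1 : (1 <= Dmax)%N)
  (eps0 : 0 < eps) (m0 : (0 < m)%N).

Local Notation NR D s i := (@node_records R d m Dmax spl g gl D s i).
Local Notation CP I j := (@choose_prob R d m Dmax spl g lam gl eps I j).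
Local Notation SG I j := (@split_gain R d m spl g lam I j).
Local Notation clipped r := (`|grad g r| <= gl).
Local Notation Pn s r i := (clipped r && @reach R d m Dmax spl s r.1 i).

Lemma NR_cons D0 r s i : NR (r :: D0) s i = if Pn s r i then r :: NR D0 s i else NR D0 s i.
Proof.
rewrite /node_records /clipped_data /=.
by case: (`|grad g r| <= gl) => //=; case: (reach _ _ _ _).
Qed.

Lemma NR_perm D1' D0 s i : perm_eq D1' D0 -> perm_eq (NR D1' s i) (NR D0 s i).
Proof. by move=> p; rewrite /node_records; apply: perm_filter; apply: perm_filter. Qed.

Lemma NR_allc D s i r : r \in NR D s i -> clipped r.
Proof. by rewrite /node_records /clipped_data !mem_filter => /andP[_ /andP[]]. Qed.

Lemma CP_perm I J j : perm_eq I J -> CP I j = CP J j.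
Proof.
move=> p; have e : split_gain spl g lam I = split_gain spl g lam J.
  by apply: funext => k; apply: split_gain_perm.
by rewrite /choose_prob /expw e.
Qed.

Lemma expw_gt0 I j : 0 < @expw R d m Dmax spl g lam gl eps I j.
Proof. exact: expR_gt0. Qed.

Lemma sum_expw_gt0 I : 0 < \sum_(k < m) @expw R d m Dmax spl g lam gl eps I k.
Proof.
pose k0 := Ordinal m0.
rewrite (bigD1 k0) //=.
have h1 := expw_gt0 I k0.
have h2 : 0 <= \sum_(k < m | k != k0) @expw R d m Dmax spl g lam gl eps I k.
  by apply: sumr_ge0 => k _; apply: ltW; apply: expw_gt0.
lra.
Qed.

Lemma CP_ge0 I j : 0 <= CP I j.
Proof. by rewrite /choose_prob divr_ge0 // ltW // ?expw_gt0 ?sum_expw_gt0. Qed.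

Local Notation en := (eps_nleaf Dmax eps).

Lemma en_ge0 : 0 <= en.
Proof. rewrite /eps_nleaf divr_ge0 // ?ltW // mulr_ge0 //. Qed.

Lemma DG_gt0 : 0 < DeltaG gl.
Proof. by rewrite /DeltaG mulr_gt0 // exprn_gt0. Qed.

Lemma expw_le I J k : `|SG I k - SG J k| <= DeltaG gl ->
  @expw R d m Dmax spl g lam gl eps I k <= expR (en / 2) * @expw R d m Dmax spl g lam gl eps J k.
Proof.
move=> h; rewrite /expw -expRD ler_expR.
have dg := DG_gt0; have e0 := en_ge0.
set K := en / (2 * DeltaG gl).
have K0 : 0 <= K by rewrite /K divr_ge0 // mulr_ge0 // ltW.
have -> : en * SG I k / (2 * DeltaG gl) = K * SG I k by rewrite /K mulrAC.
have -> : en * SG J k / (2 * DeltaG gl) = K * SG J k by rewrite /K mulrAC.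
have -> : en / 2 = K * DeltaG gl by rewrite /K; field; rewrite gt_eqF.
move: h; rewrite ler_norml => /andP[h1 h2]; nra.
Qed.

Lemma CP_close I J j : (forall k, `|SG I k - SG J k| <= DeltaG gl) ->
  CP I j <= expR en * CP J j.
Proof.
move=> h; rewrite /choose_prob.
set a := expw _ _ _ _ _ _ I j; set a' := expw _ _ _ _ _ _ J j.
set S := \sum_(k < m) _; set S' := \sum_(k < m) _.
have S0 : 0 < S by apply: sum_expw_gt0.
have S'0 : 0 < S' by apply: sum_expw_gt0.
have ha : a <= expR (en / 2) * a' by apply: expw_le.
have hS : S' <= expR (en / 2) * S.
  rewrite /S /S' mulr_sumr; apply: ler_sum => k _; apply: expw_le; rewrite distrC; exact: h.
have a0 : 0 <= a by apply: ltW; apply: expw_gt0.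
have -> : expR en = expR (en / 2) * expR (en / 2) by rewrite -expRD; congr expR; field.
rewrite ler_pdivrMr // mulrA mulrAC ler_pdivlMr //.
have := ler_pM a0 (ltW S'0) ha hS.
move=> h3; apply: le_trans h3 _; rewrite le_eqVlt; apply/orP; left; apply/eqP; ring.
Qed.

Lemma CP_node A B r s (i : 'I_(2 ^ Dmax).-1) : perm_eq B (r :: A) \/ perm_eq A (r :: B) ->
  CP (NR A s i) (s i) <= (if Pn s r i then expR en else 1) * CP (NR B s i) (s i).
Proof.
have allA := NR_allc A s i; have allB := NR_allc B s i.
case=> p.
- have p' := NR_perm _ _ s i p; rewrite NR_cons in p'.
  case hP: (Pn s r i) p' => p'.
  + move/andP: hP => [hr _].
    apply: CP_close => k; rewrite (@split_gain_perm R d m spl g lam _ _ k p') distrC.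
    by apply: gain_sens.
  + by rewrite mul1r (CP_perm _ _ _ p').
- have p' := NR_perm _ _ s i p; rewrite NR_cons in p'.
  case hP: (Pn s r i) p' => p'.
  + move/andP: hP => [hr _].
    apply: CP_close => k; rewrite (@split_gain_perm R d m spl g lam _ _ k p').
    by apply: gain_sens.
  + by rewrite mul1r (CP_perm _ _ _ p').
Qed.

Lemma SP_le A B r s : perm_eq B (r :: A) \/ perm_eq A (r :: B) ->
  @struct_prob R d m Dmax spl g lam gl eps A s <= expR (eps / 2) * @struct_prob R d m Dmax spl g lam gl eps B s.
Proof.
move=> hAB; rewrite /struct_prob.
apply: le_trans (_ : _ <= \prod_(i : 'I_(2 ^ Dmax).-1) ((if Pn s r i then expR en else 1) * CP (NR B s i) (s i))) _.
  by apply: ler_prod => i _; rewrite CP_ge0 /=; exact: CP_node.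
rewrite big_split /= ler_wpM2r //; first by apply: prodr_ge0 => i _; apply: CP_ge0.
rewrite -big_mkcond /= prodr_const -expRM_natr ler_expR.
have hc : (#|[pred i : 'I_(2 ^ Dmax).-1 | Pn s r i]| <= Dmax)%N.
  apply: leq_trans (@card_internal R d m Dmax spl s r.1 D1).
  by apply: subset_leq_card; apply/fintype.subsetP => i; rewrite !inE => /andP[].
apply: le_trans (_ : en * Dmax%:R <= _).
  by rewrite ler_wpM2l ?en_ge0 // ler_nat.
rewrite /eps_nleaf le_eqVlt; apply/orP; left; apply/eqP; field.
by rewrite pnatr_eq0 -lt0n.
Qed.

Lemma cap_ge0 : 0 <= cap t eta gl.
Proof. rewrite /cap; apply: mulr_ge0; first exact: ltW. apply: exprn_ge0; case/andP: eta01 => _ h; lra. Qed.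

Lemma DV_gt0 : 0 < DeltaV t lam eta gl.
Proof.
rewrite /DeltaV lt_min; apply/andP; split.
  by rewrite divr_gt0 // addr_gt0.
rewrite -mulrA mulr_gt0 // mulr_gt0 //; apply: exprn_gt0; case/andP: eta01 => _ h; lra.
Qed.

Lemma DV_bound a b : `|a - b| <= gl / (1 + lam) ->
  `|clip t eta gl a - clip t eta gl b| <= DeltaV t lam eta gl.
Proof.
move=> h; have c0 := cap_ge0.
rewrite !clipE // /DeltaV le_min; apply/andP; split.
  exact: le_trans (clamp_lip _ _ _ _ c0) h.
apply: le_trans (ler_normB _ _) _.
have h1 := clamp_bound _ _ a c0; have h2 := clamp_bound _ _ b c0.
move: h1 h2; rewrite /cap => h1 h2; lra.
Qed.

Lemma LM_le A B r s S : perm_eq B (r :: A) \/ perm_eq A (r :: B) ->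
  (@laplace_tuple R t lam eta gl eps _ (@leaf_means R d m Dmax t spl g lam eta gl A s) S <=
   (expR (eps / 2))%:E * @laplace_tuple R t lam eta gl eps _ (@leaf_means R d m Dmax t spl g lam eta gl B s) S)%E.
Proof.
move=> hAB.
have dv := DV_gt0.
have el : 0 < eps_leaf eps by rewrite /eps_leaf divr_gt0.
have b0 : 0 < DeltaV t lam eta gl / eps_leaf eps by rewrite divr_gt0.
have -> : eps / 2 = DeltaV t lam eta gl / (DeltaV t lam eta gl / eps_leaf eps).
  by rewrite /eps_leaf; field; apply/andP; split; rewrite gt_eqF.
apply: lap_le => //.
rewrite /leaf_means.
under eq_bigr do rewrite !tnth_mktuple.
set N := (2 ^ Dmax).-1.
apply: le_trans (_ : _ <= \sum_(j < 2 ^ Dmax) (if Pn s r (N + j) then DeltaV t lam eta gl else 0)) _.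
  apply: ler_sum => j _.
  case: hAB => p; have p' := NR_perm _ _ s (N + j) p; rewrite NR_cons in p'.
  - case hP: (Pn s r (N + j)) p' => p'.
    + move/andP: hP => [hr _].
      rewrite (@leaf_value_perm R d g lam _ _ p') distrC; apply: DV_bound.
      by apply: leaf_sens => // x; apply: NR_allc.
    + by rewrite (@leaf_value_perm R d g lam _ _ p') subrr normr0.
  - case hP: (Pn s r (N + j)) p' => p'.
    + move/andP: hP => [hr _].
      rewrite (@leaf_value_perm R d g lam _ _ p'); apply: DV_bound.
      by apply: leaf_sens => // x; apply: NR_allc.
    + by rewrite (@leaf_value_perm R d g lam _ _ p') subrr normr0.
rewrite -big_mkcond /= sumr_const.
have hc : (#|[pred j : 'I_(2 ^ Dmax) | Pn s r (N + j)]| <= 1)%N.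
  apply: leq_trans (@card_leaf R d m Dmax spl s r.1).
  by apply: subset_leq_card; apply/fintype.subsetP => i; rewrite !inE => /andP[].
move: hc; case: #|_| => [|[|k]] // _; rewrite ?mulr0n ?mulr1n //; exact: ltW.
Qed.

Lemma main_dir A B r O : perm_eq B (r :: A) \/ perm_eq A (r :: B) ->
  (@output_prob R d m Dmax t spl g lam eta gl eps A O
     <= (expR eps)%:E * @output_prob R d m Dmax t spl g lam eta gl eps B O)%E.
Proof.
move=> hAB; rewrite /output_prob ge0_sume_distrr; last first.
  move=> s _; apply: mule_ge0.
    by rewrite lee_fin /struct_prob; apply: prodr_ge0 => i _; apply: CP_ge0.
  by apply: lap_ge0; rewrite divr_gt0 // ?DV_gt0 // /eps_leaf divr_gt0.
apply: lee_sum => s _.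
have h1 := SP_le _ _ _ s hAB.
have h2 := LM_le _ _ _ s [set v | O (s, v)]%classic hAB.
have e : expR eps = expR (eps / 2) * expR (eps / 2) by rewrite -expRD; congr expR; field.
rewrite e.
have h1' : ((@struct_prob R d m Dmax spl g lam gl eps A s)%:E <=
   (expR (eps / 2) * @struct_prob R d m Dmax spl g lam gl eps B s)%:E)%E by rewrite lee_fin.
apply: le_trans (lee_pmul _ _ h1' h2) _.
- by rewrite lee_fin /struct_prob; apply: prodr_ge0 => i _; apply: CP_ge0.
- by apply: lap_ge0; rewrite divr_gt0 // ?DV_gt0 // /eps_leaf divr_gt0.
rewrite !EFinM -!muleA le_eqVlt; apply/orP; left; apply/eqP.
by congr (_ * _)%E; rewrite muleCA.
Qed.
End Main.

Theorem theorem7 (R : realType) (d m : nat) (spl : 'I_m -> 'I_d * R)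
  (g : 'rV[R]_d -> R -> R) (lam eta gl eps : R) (t Dmax : nat) :
  0 < lam -> 0 < eta < 1 -> 0 < gl -> (1 <= t)%N -> (1 <= Dmax)%N -> 0 < eps ->
  (0 < m)%N -> injective spl ->
  forall D D' : seq (record R d),
    (forall r, r \in D -> -1 <= r.2 <= 1) ->
    (forall r, r \in D' -> -1 <= r.2 <= 1) ->
    neighboring D D' ->
  forall O : set (tree_struct Dmax m * (2 ^ Dmax).-tuple R),
    @output_measurable R Dmax m O ->
    (@output_prob R d m Dmax t spl g lam eta gl eps D O
       <= (expR eps)%:E * @output_prob R d m Dmax t spl g lam eta gl eps D' O)%E.
Proof.
move=> lam0 eta01 gl0 t1 D1 eps0 m0 spl_inj D D' _ _ hn O _.
case: hn => [[r p]|[r p]].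
- by apply: main_dir => //; left; exact: p.
- by apply: main_dir => //; right; exact: p.
Qed.
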